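(* Fix $d\ge2$, $k\in\{1,\dots,d-1\}$ and $\theta\in[0,1)$. Let $\sigma_1\ge\dots\ge\sigma_d\ge0$ satisfy $\sigma_{k+2}=\dots=\sigma_d=0$ and $\sum_{j=1}^{k+1}\sigma_j^2=1$. If $\theta=0$ assume $\sigma_{k+1}=0$; if $\theta>0$ assume $\sigma_{k+1}\le\frac\theta k\sum_{j=1}^k\sigma_j$. Then $$\sum_{j=1}^{k+1}\sigma_j\le\frac{k+\theta}{\sqrt{k+\theta^2}},$$ with equality if and only if $\sigma_1=\dots=\sigma_k=\frac1{\sqrt{k+\theta^2}}$ and $\sigma_{k+1}=\frac\theta{\sqrt{k+\theta^2}}$. *)

(* Defs.v *)
From Stdlib Require Import Reals Lra Lia.
Open Scope R_scope.

(* sum_{j=1}^{n} f j  (empty sum = 0 when n = 0) *)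
Definition sum1 (f : nat -> R) (n : nat) : R :=
  match n with
  | O => 0
  | S m => sum_f_R0 (fun i => f (S i)) m
  end.

(* Main.v *)
Require Import Defs.
From Stdlib Require Import Reals Lra Lia.
Open Scope R_scope.

Lemma sum_nonneg_sq (g : nat -> R) (n : nat) :
  0 <= sum_f_R0 (fun i => (g i)^2) n.
Proof.
  induction n; cbn [sum_f_R0].
  - apply pow2_ge_0.
  - pose proof (pow2_ge_0 (g (S n))). lra.
Qed.

Lemma cs_sum (g : nat -> R) (n : nat) :
  (sum_f_R0 g n)^2 <= INR (S n) * sum_f_R0 (fun i => (g i)^2) n.
Proof.
  induction n.
  - cbn [sum_f_R0]. change (INR 1) with 1. lra.
  - cbn [sum_f_R0]. set (A := sum_f_R0 g n) in *.
    set (B := sum_f_R0 (fun i => g i ^ 2) n) in *.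
    set (x := g (S n)).
    rewrite (S_INR (S n)). set (N := INR (S n)) in *.
    assert (HN : 0 < N) by (apply lt_0_INR; lia).
    assert (H : N * (B + N * x^2 - 2 * A * x) >= 0).
    { pose proof (pow2_ge_0 (A - N*x)). nra. }
    assert (B + N * x^2 - 2 * A * x >= 0).
    { destruct (Rle_or_lt 0 (B + N * x^2 - 2 * A * x)); [lra|]. nra. }
    nra.
Qed.

Lemma sum_sq_dev (g : nat -> R) (a : R) (n : nat) :
  sum_f_R0 (fun i => (g i - a)^2) n =
  sum_f_R0 (fun i => (g i)^2) n - 2 * a * sum_f_R0 g n + INR (S n) * a^2.
Proof.
  induction n.
  - cbn [sum_f_R0 INR]. ring.
  - cbn [sum_f_R0]. rewrite IHn. rewrite (S_INR (S n)). ring.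
Qed.

Lemma sum_sq_zero (g : nat -> R) (n : nat) :
  sum_f_R0 (fun i => (g i)^2) n = 0 -> forall i, (i <= n)%nat -> g i = 0.
Proof.
  induction n; intros H i Hi.
  - cbn [sum_f_R0] in H. assert (i = 0)%nat by lia. subst. nra.
  - cbn [sum_f_R0] in H. pose proof (sum_nonneg_sq g n).
    assert (g (S n) ^2 >= 0) by nra.
    assert (Hs : sum_f_R0 (fun i => g i ^ 2) n = 0) by lra.
    assert (Hx : g (S n) ^ 2 = 0) by lra.
    destruct (Nat.eq_dec i (S n)).
    + subst. nra.
    + apply IHn; [exact Hs| lia].
Qed.

Theorem lemma3p15 (d k : nat) (theta : R) (sigma : nat -> R)
  (hd : (2 <= d)%nat) (hk1 : (1 <= k)%nat) (hk2 : (k <= d - 1)%nat)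
  (htheta : 0 <= theta < 1)
  (hmono : forall i, (1 <= i)%nat -> (i < d)%nat -> sigma (S i) <= sigma i)
  (hnonneg : 0 <= sigma d)
  (hzero : forall i, (k + 2 <= i)%nat -> (i <= d)%nat -> sigma i = 0)
  (hnorm : sum1 (fun j => (sigma j)^2) (k + 1) = 1)
  (hcase0 : theta = 0 -> sigma (k + 1)%nat = 0)
  (hcasepos : 0 < theta -> sigma (k + 1)%nat <= theta / INR k * sum1 sigma k) :
  sum1 sigma (k + 1) <= (INR k + theta) / sqrt (INR k + theta^2) /\
  (sum1 sigma (k + 1) = (INR k + theta) / sqrt (INR k + theta^2) <->
    (forall j, (1 <= j)%nat -> (j <= k)%nat -> sigma j = 1 / sqrt (INR k + theta^2)) /\
    sigma (k + 1)%nat = theta / sqrt (INR k + theta^2)).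
Proof.
  destruct k as [|m]; [lia|].
  assert (Ek : (S m + 1 = S (S m))%nat) by lia.
  rewrite Ek in *.
  unfold sum1 in *.
  rewrite tech5 in hnorm |- *.
  set (g := fun i => sigma (S i)) in *.
  pose proof (cs_sum g m) as HCS.
  set (S0 := sum_f_R0 g m) in *.
  set (Q := sum_f_R0 (fun i => g i ^ 2) m) in *.
  change (sum_f_R0 (fun i => sigma (S i) ^ 2) m) with Q in hnorm.
  change (sum_f_R0 (fun i => sigma (S i)) m) with S0 in *.
  set (t := sigma (S (S m))) in *.
  set (K := INR (S m)) in *.
  assert (HK : 1 <= K) by (unfold K; rewrite S_INR; pose proof (pos_INR m); lra).
  assert (Hc2 : 0 < K + theta^2) by nra.
  set (c := sqrt (K + theta^2)).
  assert (Hc : 0 < c) by (apply sqrt_lt_R0; lra).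
  assert (Hcc : c * c = K + theta^2) by (apply sqrt_sqrt; lra).
  assert (Ht : t <= theta / K * S0).
  { destruct (Req_dec theta 0) as [E|E].
    - rewrite (hcase0 E), E. unfold Rdiv. lra.
    - apply hcasepos. lra. }
  assert (Ht' : K * t <= theta * S0).
  { apply Rmult_le_compat_l with (r := K) in Ht; [|lra].
    replace (K * (theta / K * S0)) with (theta * S0) in Ht by (field; lra). exact Ht. }
  assert (H1 : (S0 + theta * t)^2 <= c * c).
  { rewrite Hcc.
    assert (K * (S0 + theta*t)^2 + (theta*S0 - K*t)^2 = (K + theta^2) * (S0^2 + K * t^2)) by ring.
    assert (S0^2 + K*t^2 <= K) by nra.
    assert (0 <= (theta*S0 - K*t)^2) by nra.
    assert (K * (S0 + theta*t)^2 <= K * (K + theta^2)) by nra.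
    nra. }
  assert (H2 : S0 + theta * t <= c) by nra.
  assert (Hid : (K + theta^2) * (S0 + t) = (K + theta) * (S0 + theta * t) + (1 - theta) * (K * t - theta * S0)) by ring.
  assert (Hmain : c * (S0 + t) <= K + theta).
  { assert (c * (c * (S0 + t)) <= c * (K + theta)).
    { rewrite <- Rmult_assoc, Hcc, Hid. nra. }
    nra. }
  split.
  { apply Rmult_le_reg_l with c; [lra|]. unfold Rdiv. rewrite <- Rmult_assoc.
    replace (c * (K + theta) * / c) with (K + theta) by (field; lra). lra. }
  split.
  - intro Heq.
    assert (Hm : c * (S0 + t) = K + theta).
    { rewrite Heq. field. lra. }
    assert (Ha : (K + theta) * (S0 + theta * t) + (1 - theta) * (K * t - theta * S0) = (K+theta) * c).
    { rewrite <- Hid, <- Hcc. rewrite <- Hm. ring. }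
    assert (E1 : S0 + theta * t = c) by nra.
    assert (E2 : K * t = theta * S0) by nra.
    assert (ES : S0 = K / c).
    { apply Rmult_eq_reg_l with (K + theta^2); [|lra].
      rewrite <- Hcc. field_simplify; [|lra]. nra. }
    assert (ET : t = theta / c).
    { apply Rmult_eq_reg_l with K; [|lra]. rewrite E2, ES. field. lra. }
    assert (EQ : Q = K / (c*c)).
    { assert (HQ : Q = 1 - t^2) by lra. rewrite HQ, ET. apply Rmult_eq_reg_l with (c*c); [|nra]. replace (c*c*(1-(theta/c)^2)) with (c*c - theta^2) by (field; lra). replace (c*c*(K/(c*c))) with K by (field; lra). lra. }
    pose proof (sum_sq_dev g (1/c) m) as Hd.
    fold S0 Q K in Hd.
    assert (Hz : sum_f_R0 (fun i => (g i - 1/c)^2) m = 0).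
    { rewrite Hd, EQ, ES. field. lra. }
    split; [|exact ET].
    intros j Hj1 Hj2.
    pose proof (sum_sq_zero (fun i => g i - 1/c) m Hz (j - 1)%nat ltac:(lia)) as Hj.
    unfold g in Hj. replace (S (j-1)) with j in Hj by lia. lra.
  - intros [Hj Ht2].
    assert (ES : S0 = K / c).
    { unfold S0. rewrite (sum_eq g (fun _ => 1/c)).
      - rewrite sum_cte. unfold K. field. lra.
      - intros i Hi. unfold g. apply Hj; lia. }
    fold t in Ht2. rewrite ES, Ht2. field. lra.
Qed.
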